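(* For integers $n\ge 0$ and $p$ with $p\le n+1$, $$\sum_{j,k}\binom{n}{k}\genfrac{\{}{\}}{0pt}{}{k}{j}\genfrac{[}{]}{0pt}{}{j+1}{p}(-1)^j=\begin{cases}0,&(n+1>p)\\(-1)^n,&(n+1=p).\end{cases}$$
   Context: Here $\genfrac{[}{]}{0pt}{}{n}{k}$ denotes the unsigned (absolute) Stirling number of the first kind and $\genfrac{\{}{\}}{0pt}{}{n}{k}$ the ordinary Stirling number of the second kind (Knuth's notation), with $\genfrac{[}{]}{0pt}{}{0}{0}=\genfrac{\{}{\}}{0pt}{}{0}{0}=1$, $\genfrac{[}{]}{0pt}{}{n}{0}=\genfrac{\{}{\}}{0pt}{}{n}{0}=0$ for $n>0$, and $\genfrac{[}{]}{0pt}{}{n}{k}=\genfrac{\{}{\}}{0pt}{}{n}{k}=0$ for $0\le n<k$. The double sum is over all integers $j,k$ with $0\le j\le k\le n$. *)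

(* Defs.v *)
From mathcomp Require Import all_boot all_order all_algebra.
Set Implicit Arguments. Unset Strict Implicit. Unset Printing Implicit Defensive.
Import GRing.Theory Num.Theory.

Fixpoint stirling1 (n k : nat) : nat :=
  match n, k with
  | 0, 0 => 1
  | 0, _.+1 => 0
  | _.+1, 0 => 0
  | n'.+1, k'.+1 => n' * stirling1 n' k + stirling1 n' k'
  end.

Fixpoint stirling2 (n k : nat) : nat :=
  match n, k with
  | 0, 0 => 1
  | 0, _.+1 => 0
  | _.+1, 0 => 0
  | n'.+1, k'.+1 => k * stirling2 n' k + stirling2 n' k'
  end.

Definition stirling1z (n : nat) (k : int) : nat :=
  match k with
  | Posz k' => stirling1 n k'
  | Negz _ => 0
  end.

Example s1_check : [:: stirling1 4 1; stirling1 4 2; stirling1 4 3; stirling1 4 4] = [:: 6; 11; 6; 1].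
Proof. by []. Qed.
Example s2_check : [:: stirling2 4 1; stirling2 4 2; stirling2 4 3; stirling2 4 4] = [:: 1; 7; 6; 1].
Proof. by []. Qed.

(* Main.v *)
Require Import Defs.
From mathcomp Require Import all_boot all_order all_algebra zify ring lra.
Import GRing.Theory Num.Theory.

Lemma s2_gt k j : (k < j)%N -> stirling2 k j = 0%N.
Proof.
elim: k j => [|k IH] [|j] //= H.
by rewrite !IH ?muln0 // ltnW.
Qed.

Lemma s2_0j j : stirling2 0 j = (j == 0%N).
Proof. by case: j. Qed.

Lemma s2_S N m : stirling2 N.+1 m = (m * stirling2 N m + (if m is m'.+1 then stirling2 N m' else 0))%N.
Proof. by case: m => [|m] //=; rewrite muln0. Qed.

Lemma s1_0p p : stirling1 0 p = (p == 0%N).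
Proof. by case: p. Qed.

Lemma s1_S m p : stirling1 m.+1 p = (m * stirling1 m p + (if p is p'.+1 then stirling1 m p' else 0))%N.
Proof. case: p => [|p] //=; case: m => [|m] //=; by rewrite ?addn0 ?muln0. Qed.

Arguments stirling2 : simpl never.
Arguments stirling1 : simpl never.

Lemma lemA n j : (\sum_(k < n.+1) 'C(n,k) * stirling2 k j)%N = stirling2 n.+1 j.+1.
Proof.
elim: n j => [|n IH] j.
  rewrite big_ord_recl big_ord0 s2_S s2_0j s2_0j.
  by case: j => [|j] /=; rewrite ?s2_0j /= bin0 ?muln0 ?mul1n ?muln1.
rewrite big_ord_recl.
under eq_bigr => k _ do rewrite lift0 binS mulnDl.
rewrite big_split /= bin0 mul1n addnA.
have E : (stirling2 0 j + \sum_(i < n.+1) 'C(n, i.+1) * stirling2 i.+1 j = 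
   \sum_(k < n.+2) 'C(n,k) * stirling2 k j)%N.
  rewrite [in RHS]big_ord_recl bin0 mul1n.
  by apply: congr1; apply: eq_bigr => i _; rewrite lift0.
rewrite E {E} big_ord_recr /= bin_small // mul0n addn0 IH.
case: j => [|j].
  rewrite big1 ?add0n; last by move=> k _; rewrite s2_S muln0.
  by rewrite (s2_S n.+1 1) (s2_S n 0) /= mul1n !addn0.
under eq_bigr => k _ do rewrite s2_S mulnDr mulnCA.
rewrite big_split /= -big_distrr /= !IH.
rewrite (s2_S n.+1 j.+2); lia.
Qed.
Local Open Scope ring_scope.

Lemma lemB N p M : (N < M)%N ->
  \sum_(m < M) (-1) ^+ m * (stirling2 N m * stirling1 m p)%N%:Z
  = (if N == p then (-1) ^+ p else 0 : int).
Proof.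
elim: N p M => [|N IH] p [|M] //= hM.
  rewrite big_ord_recl big1 ?addr0.
    by rewrite expr0 mul1r s2_0j s1_0p /=; case: p.
  by move=> i _; rewrite lift0 s2_0j /= mul0n mulr0.
have hM' : (N < M)%N by [].
transitivity (\sum_(m < M.+1) (-1) ^+ m * (m * stirling2 N m * stirling1 m p)%N%:Z
   + \sum_(m < M.+1) (-1) ^+ m * ((if (m : nat) is m'.+1 then stirling2 N m' else 0) * stirling1 m p)%N%:Z).
  rewrite -big_split /=; apply: eq_bigr => m _.
  by rewrite s2_S mulnDl PoszD mulrDr.
rewrite big_ord_recr /= s2_gt // muln0 mul0n mulr0 addr0.
rewrite big_ord_recl /= mul0n mulr0 add0r.
transitivity (\sum_(i < M) (-1) ^+ i * (i * stirling2 N i * stirling1 i p)%N%:Z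
   - \sum_(i < M) (-1) ^+ i * (stirling2 N i * stirling1 i p * i)%N%:Z
   - \sum_(i < M) (-1) ^+ i * (stirling2 N i * (if p is p'.+1 then stirling1 i p' else 0))%N%:Z).
  rewrite -addrA; congr (_ + _).
  rewrite -opprD -big_split /= -sumrN; apply: eq_bigr => i _.
  rewrite /bump /= add0n add1n s1_S exprS mulN1r mulNr; congr (- _).
  rewrite -mulrDr; congr (_ * _).
  by rewrite -PoszD; congr Posz; ring.
have -> : \sum_(i < M) (-1) ^+ i * (i * stirling2 N i * stirling1 i p)%N%:Z
   = \sum_(i < M) (-1) ^+ i * (stirling2 N i * stirling1 i p * i)%N%:Z.
  by apply: eq_bigr => i _; congr (_ * Posz _); ring.
rewrite subrr sub0r.
case: p => [|p].
  by rewrite big1 ?oppr0 // => i _; rewrite muln0 mulr0.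
by rewrite IH // eqSS; case: eqP => _; rewrite ?oppr0 // exprS mulN1r.
Qed.
Lemma PoszSum n (f : nat -> nat) : Posz (\sum_(i < n) f i)%N = \sum_(i < n) (f i)%:Z.
Proof. elim: n => [|n IH]; by rewrite ?big_ord0 // !big_ord_recr /= PoszD IH. Qed.

Theorem mainTheorem4 (n : nat) (p : int) (hp : p <= (n.+1)%:Z) :
  \sum_(0 <= k < n.+1) \sum_(0 <= j < k.+1)
     (('C(n, k) * stirling2 k j * stirling1z j.+1 p)%N%:Z * (-1) ^+ j)
  = (if p == (n.+1)%:Z then (-1) ^+ n else 0 : int).
Proof.
transitivity (\sum_(0 <= k < n.+1) \sum_(0 <= j < n.+1)
     (('C(n, k) * stirling2 k j * stirling1z j.+1 p)%N%:Z * (-1) ^+ j)).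
  apply: eq_big_nat => k /andP[_ hk].
  rewrite (big_nat_widen _ _ n.+1) // big_mkcond /=.
  apply: eq_bigr => j _; case: ifP => // hj.
  by rewrite s2_gt ?muln0 ?mul0n ?mul0r // ltnNge -ltnS hj.
rewrite exchange_big /= big_mkord.
transitivity (\sum_(j < n.+1) (-1) ^+ j * (stirling2 n.+1 j.+1 * stirling1z j.+1 p)%N%:Z).
  apply: eq_bigr => j _.
  rewrite big_mkord -mulr_suml mulrC; congr (_ * _).
  rewrite -lemA PoszM (big_morph Posz PoszD (erefl (Posz 0))) mulr_suml; apply: eq_bigr => k _.
  by rewrite PoszM.
case: p hp => [p|p] hp /=; last first.
  by rewrite big1 // => j _; rewrite muln0 mulr0.
have := lemB n.+1 p n.+2 (ltnSn n.+1).
rewrite big_ord_recl /= (s2_S n 0) /= mul0n mulr0 add0r.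
under eq_bigr => i _ do rewrite /bump /= add1n exprS mulN1r mulNr.
rewrite sumrN => /eqP; rewrite eqr_oppLR => /eqP ->.
rewrite eqz_nat eq_sym; case: eqP => [->|]; first by rewrite exprS mulN1r opprK.
by rewrite oppr0.
Qed.
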